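(* Let $G$ be a circle of circumference $1$, let $\mathbf{x}\in G^n$ be such that the agents are on one semicircle, let $i\in N$ and $x_i'\in G$ be such that the agents in $\mathbf{x}'=(x_i',\mathbf{x}_{-i})$ are also on one semicircle. Then $\mathrm{cost}(\mathrm{lrm}(\mathbf{x}),x_i)\le\mathrm{cost}(\mathrm{lrm}(\mathbf{x}'),x_i)$.
   Context: $G$ is a circle of circumference $1$; $d(x,y)$ is the length of the shorter arc. For a distribution $P$ on $G$, $\mathrm{cost}(P,x_i)=\mathbb{E}_{y\sim P}[d(x_i,y)]$. Agents are on one semicircle if all locations lie in some closed arc of length $1/2$. LRM mechanism: for such a profile fix a closed arc of minimal length containing all agent locations (length at most $1/2$), with endpoints $l,r$ (agent locations); $\mathrm{lrm}(\mathbf{x})$ returns $l$ with probability $1/4$, $r$ with probability $1/4$, and the midpoint of that arc with probability $1/2$. *)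

(* Defs.v *)
From Stdlib Require Import Reals Lra List.
Open Scope R_scope.

(* The circle G of circumference 1 is R / Z; a point is represented by any
   real number, two reals denoting the same point iff they differ by an integer. *)

(* Counter-clockwise arc length from x to y, in [0,1). *)
Definition ccw (x y : R) : R := frac_part (y - x).

Definition d (x y : R) : R := Rmin (ccw x y) (ccw y x).

(* Finitely supported probability distributions on G: lists of (weight, point). *)
Definition dist := list (R * R).

Definition cost (P : dist) (y : R) : R :=
  fold_right (fun pz acc => fst pz * d y (snd pz) + acc) 0 P.

(* Profiles: x : nat -> R, agent j < n located at x j. *)

Definition in_arc (a L p : R) : Prop := ccw a p <= L.

Definition on_semicircle (n : nat) (x : nat -> R) : Prop :=
  exists a : R, forall j, (j < n)%nat -> in_arc a (1/2) (x j).

Definition covers (n : nat) (x : nat -> R) (l r : R) : Prop :=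
  forall j, (j < n)%nat -> in_arc l (ccw l r) (x j).

Definition min_arc (n : nat) (x : nat -> R) (l r : R) : Prop :=
  (exists j, (j < n)%nat /\ l = x j) /\
  (exists k, (k < n)%nat /\ r = x k) /\
  covers n x l r /\
  (forall a L : R, 0 <= L -> (forall j, (j < n)%nat -> in_arc a L (x j)) ->
       ccw l r <= L).

Definition lrm_dist (l r : R) : dist :=
  (1/4, l) :: (1/4, r) :: (1/2, l + ccw l r / 2) :: nil.

Definition update (x : nat -> R) (i : nat) (xi' : R) : nat -> R :=
  fun j => if Nat.eqb j i then xi' else x j.

(* Main.v *)
Require Import Defs.
From Stdlib Require Import Reals Lra Lia ZArith Arith.
Open Scope R_scope.

Lemma frac_char y (k : Z) : 0 <= y - IZR k < 1 -> frac_part y = y - IZR k.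
Proof.
  intros H. unfold frac_part, Int_part.
  assert (Hu : up y = (k + 1)%Z).
  { symmetry; apply tech_up; rewrite plus_IZR; simpl; lra. }
  rewrite Hu. replace (k + 1 - 1)%Z with k by ring. reflexivity.
Qed.

Lemma frac_decomp u : u = frac_part u + IZR (Int_part u).
Proof. unfold frac_part; ring. Qed.

Definition D u := Rmin (frac_part u) (frac_part (- u)).

Lemma d_D x y : d x y = D (y - x).
Proof. unfold d, ccw, D. replace (x - y) with (- (y - x)) by ring. reflexivity. Qed.

Lemma D_nonneg u : 0 <= D u.
Proof.
  unfold D. destruct (base_fp u). destruct (base_fp (-u)).
  apply Rmin_glb; lra.
Qed.

Lemma frac_opp_le u : frac_part (- u) <= 1 - frac_part u.
Proof.
  pose proof (frac_decomp u) as E. destruct (base_fp u) as [f0 f1].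
  set (m := Int_part u) in *. set (f := frac_part u) in *.
  destruct (Req_dec f 0) as [Hf|Hf].
  - rewrite (frac_char (-u) (- m)); rewrite opp_IZR; lra.
  - rewrite (frac_char (-u) (- m - 1)); rewrite minus_IZR, opp_IZR; simpl; lra.
Qed.

Lemma D_le_abs u (k : Z) : D u <= Rabs (u - IZR k).
Proof.
  pose proof (frac_decomp u) as E. destruct (base_fp u) as [f0 f1].
  pose proof (frac_opp_le u).
  assert (D u <= frac_part u) by (unfold D; apply Rmin_l).
  assert (D u <= frac_part (-u)) by (unfold D; apply Rmin_r).
  set (m := Int_part u) in *. set (f := frac_part u) in *.
  destruct (Z_le_gt_dec k m) as [Hk|Hk].
  - apply IZR_le in Hk. unfold Rabs; destruct (Rcase_abs _); lra.
  - assert (Hk' : (m + 1 <= k)%Z) by lia. apply IZR_le in Hk'.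
    rewrite plus_IZR in Hk'; simpl in Hk'.
    unfold Rabs; destruct (Rcase_abs _); lra.
Qed.

Lemma D_attained u : exists k, D u = Rabs (u - IZR k).
Proof.
  unfold D, Rmin. destruct (Rle_dec _ _).
  - exists (Int_part u). pose proof (frac_decomp u). destruct (base_fp u).
    rewrite Rabs_pos_eq; lra.
  - exists (- Int_part (- u))%Z. pose proof (frac_decomp (-u)). destruct (base_fp (-u)).
    rewrite opp_IZR. replace (u - - IZR (Int_part (- u))) with (- frac_part (-u)) by lra.
    rewrite Rabs_Ropp, Rabs_pos_eq; lra.
Qed.

Lemma D_half u : frac_part u <= 1/2 -> D u = frac_part u.
Proof.
  intros Hh. apply Rle_antisym; [unfold D; apply Rmin_l|].
  destruct (D_attained u) as [k Hk]. rewrite Hk.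
  pose proof (frac_decomp u) as E. destruct (base_fp u) as [f0 f1].
  set (m := Int_part u) in *. set (f := frac_part u) in *.
  destruct (Z_le_gt_dec k m) as [Hk'|Hk'].
  - apply IZR_le in Hk'. unfold Rabs; destruct (Rcase_abs _); lra.
  - assert (Hk2 : (m + 1 <= k)%Z) by lia. apply IZR_le in Hk2.
    rewrite plus_IZR in Hk2; simpl in Hk2.
    unfold Rabs; destruct (Rcase_abs _); lra.
Qed.

Lemma D_triang u v : D (u + v) <= D u + D v.
Proof.
  destruct (D_attained u) as [k1 H1]. destruct (D_attained v) as [k2 H2].
  rewrite H1, H2. eapply Rle_trans; [apply (D_le_abs _ (k1 + k2))|].
  rewrite plus_IZR. replace (u + v - (IZR k1 + IZR k2)) with ((u - IZR k1) + (v - IZR k2)) by ring.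
  apply Rabs_triang.
Qed.

Lemma D_opp u : D (- u) = D u.
Proof. unfold D. rewrite Ropp_involutive. apply Rmin_comm. Qed.

Lemma ccw_range x y : 0 <= ccw x y < 1.
Proof. unfold ccw. destruct (base_fp (y - x)); lra. Qed.

Lemma ccw_self x : ccw x x = 0.
Proof. unfold ccw. rewrite (frac_char _ 0); simpl; lra. Qed.

Lemma ccw_sub l x r : ccw l x <= ccw l r -> ccw x r = ccw l r - ccw l x.
Proof.
  unfold ccw. intros H.
  pose proof (frac_decomp (r - l)). pose proof (frac_decomp (x - l)).
  destruct (base_fp (r - l)). destruct (base_fp (x - l)).
  rewrite (frac_char _ (Int_part (r - l) - Int_part (x - l))); rewrite minus_IZR; lra.
Qed.

Lemma ccw_off1 l x c : 0 <= ccw l x - c < 1 -> ccw (l + c) x = ccw l x - c.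
Proof.
  unfold ccw. intros H. pose proof (frac_decomp (x - l)).
  rewrite (frac_char _ (Int_part (x - l))); lra.
Qed.

Lemma ccw_off2 l x c : 0 <= c - ccw l x < 1 -> ccw x (l + c) = c - ccw l x.
Proof.
  unfold ccw. intros H. pose proof (frac_decomp (x - l)).
  rewrite (frac_char _ (- Int_part (x - l))); rewrite opp_IZR; lra.
Qed.

Lemma cost_lrm l r y :
  cost (lrm_dist l r) y =
  1/4 * d y l + 1/4 * d y r + 1/2 * d y (l + ccw l r / 2).
Proof. unfold cost, lrm_dist; simpl. ring. Qed.

Lemma lower l' r' y p : ccw l' r' <= 1/2 -> ccw l' p <= ccw l' r' ->
  d y p / 2 <= cost (lrm_dist l' r') y.
Proof.
  intros HL Hp. rewrite cost_lrm.
  set (L := ccw l' r') in *. set (m := l' + L / 2).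
  assert (H1 : d l' r' = L) by (rewrite d_D; apply D_half; exact HL).
  assert (H2 : d l' r' <= d y l' + d y r').
  { rewrite !d_D. replace (r' - l') with (- (l' - y) + (r' - y)) by ring.
    rewrite <- (D_opp (l' - y)). apply D_triang. }
  assert (H3 : d y p <= d y m + d m p).
  { rewrite !d_D. replace (p - y) with ((m - y) + (p - m)) by ring. apply D_triang. }
  assert (H4 : d m p <= L / 2).
  { pose proof (ccw_range l' p). pose proof (ccw_range l' r').
    destruct (Rle_dec (L/2) (ccw l' p)).
    - unfold d. eapply Rle_trans; [apply Rmin_l|]. unfold m.
      rewrite ccw_off1; unfold L in *; lra.
    - unfold d. eapply Rle_trans; [apply Rmin_r|]. unfold m.
      rewrite ccw_off2; unfold L in *; lra. }
  lra.
Qed.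

Lemma upper l r y : ccw l y <= ccw l r ->
  (ccw l y <= ccw l r / 2 -> cost (lrm_dist l r) y <= (ccw l r - ccw l y) / 2) /\
  (ccw l r / 2 <= ccw l y -> cost (lrm_dist l r) y <= ccw l y / 2).
Proof.
  intros Ht. rewrite cost_lrm.
  pose proof (ccw_range l y). pose proof (ccw_range l r).
  assert (A : d y l <= ccw l y) by (unfold d; apply Rmin_r).
  assert (B : d y r <= ccw l r - ccw l y).
  { unfold d. eapply Rle_trans; [apply Rmin_l|]. rewrite (ccw_sub l y r Ht); lra. }
  split; intros Hc.
  - assert (C : d y (l + ccw l r / 2) <= ccw l r / 2 - ccw l y).
    { unfold d. eapply Rle_trans; [apply Rmin_l|]. rewrite ccw_off2; lra. }
    lra.
  - assert (C : d y (l + ccw l r / 2) <= ccw l y - ccw l r / 2).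
    { unfold d. eapply Rle_trans; [apply Rmin_r|]. rewrite ccw_off1; lra. }
    lra.
Qed.

Theorem mainTheorem10 (n : nat) (x : nat -> R) (i : nat) (xi' : R)
  (l r l' r' : R) :
  (i < n)%nat ->
  on_semicircle n x ->
  on_semicircle n (update x i xi') ->
  min_arc n x l r ->
  min_arc n (update x i xi') l' r' ->
  cost (lrm_dist l r) (x i) <= cost (lrm_dist l' r') (x i).
Proof.
  intros Hi [a Ha] [a' Ha'] [[j [Hj Hl]] [[k [Hk Hr]] [Hcov Hmin]]] [_ [_ [Hcov' Hmin']]].
  assert (HL : ccw l r <= 1/2) by (apply (Hmin a (1/2)); [lra | exact Ha]).
  assert (HL' : ccw l' r' <= 1/2) by (apply (Hmin' a' (1/2)); [lra | exact Ha']).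
  assert (Ht : ccw l (x i) <= ccw l r) by (apply Hcov; exact Hi).
  pose proof (ccw_range l (x i)). pose proof (ccw_range l r).
  destruct (upper l r (x i) Ht) as [U1 U2].
  assert (Z0 : 0 <= cost (lrm_dist l' r') (x i)).
  { eapply Rle_trans; [|apply (lower l' r' (x i) l'); auto; rewrite ccw_self; apply ccw_range].
    rewrite d_D. pose proof (D_nonneg (l' - x i)). lra. }
  destruct (Rle_dec (ccw l (x i)) (ccw l r / 2)) as [Hc|Hc].
  - specialize (U1 Hc).
    destruct (Nat.eq_dec k i) as [->|Hki].
    + assert (Eq : ccw l (x i) = ccw l r) by (rewrite Hr; reflexivity). lra.
    + assert (Hp : ccw l' (x k) <= ccw l' r').
      { pose proof (Hcov' k Hk) as P. unfold in_arc, update in P.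
        apply Nat.eqb_neq in Hki. rewrite Hki in P. exact P. }
      pose proof (lower l' r' (x i) (x k) HL' Hp) as Lw.
      rewrite <- Hr in Lw.
      assert (E : d (x i) r = ccw l r - ccw l (x i)).
      { rewrite d_D. rewrite D_half; fold (ccw (x i) r); rewrite (ccw_sub l (x i) r Ht); lra. }
      lra.
  - assert (Hc' : ccw l r / 2 <= ccw l (x i)) by lra.
    specialize (U2 Hc').
    destruct (Nat.eq_dec j i) as [->|Hji].
    + assert (Eq : ccw l (x i) = 0) by (rewrite <- Hl; apply ccw_self). lra.
    + assert (Hp : ccw l' (x j) <= ccw l' r').
      { pose proof (Hcov' j Hj) as P. unfold in_arc, update in P.
        apply Nat.eqb_neq in Hji. rewrite Hji in P. exact P. }
      pose proof (lower l' r' (x i) (x j) HL' Hp) as Lw.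
      rewrite <- Hl in Lw.
      assert (E : d (x i) l = ccw l (x i)).
      { rewrite d_D. replace (l - x i) with (- (x i - l)) by ring. rewrite D_opp.
        rewrite D_half; fold (ccw l (x i)); lra. }
      lra.
Qed.
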